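(* (a) There is no odd perfect number of the form $n = 5^{\alpha} 3^{2b} q_1^{6k_1+2}\cdots q_t^{6k_t+2}$, where $\alpha \ge 1$, $b \ge 0$ and $k_1,\ldots,k_t \ge 0$ are integers, $5 < q_1 < \cdots < q_t$ are primes, and at least one of $q_1,\ldots,q_t$ is good. (b) There is no perfect number of the form $n = 5^{\alpha} 3^{2b} q_1^{6k_1+2}\cdots q_t^{6k_t+2}$, where $\alpha \ge 1$, $b\ge 0$ and $k_1,\ldots,k_t\ge 0$ are integers, $5 < q_1 < \cdots < q_t$ are primes, and at least one of $q_1,\ldots,q_t$ does not exceed $157$. (c) If every prime $p > 7$ is good, then there is no odd perfect number of the form $n = 5^{\alpha} 3^{2b} q_1^{6k_1+2}\cdots q_t^{6k_t+2}$, where $\alpha \ge 1$, $b\ge 0$ and $k_1,\ldots,k_t\ge 0$ are integers and $q_1,\ldots,q_t$ are primes exceeding $5$.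
   Context: A positive integer $n$ is perfect if $\sigma(n)=2n$, where $\sigma$ is the sum-of-divisors function. Let $\Phi_3(x) = x^2+x+1$ be the third cyclotomic polynomial. Let $\Sigma$ be the set of primes $p$ with $p \equiv 2$ or $p \equiv 4 \pmod 7$. For a prime $x > 7$, let $T(x)$ be the set of primes $q \neq 3$ with $q \mid \Phi_3(x)$. For a prime $p > 7$, define sets $S_n(p)$ recursively by $S_0(p) = \{p\}$ and $S_{n+1}(p) = S_n(p) \cup \bigcup_{x \in S_n(p)} T(x)$. A prime $p > 7$ is called good if $S_n(p) \cap \Sigma \neq \emptyset$ for some integer $n \ge 0$. *)

(* Defs.v *)
From mathcomp Require Import all_boot.
Set Implicit Arguments. Unset Strict Implicit. Unset Printing Implicit Defensive.

Definition sigma (n : nat) : nat := \sum_(d <- divisors n) d.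

Definition perfect (n : nat) : Prop := 0 < n /\ sigma n = 2 * n.

Definition Phi3 (x : nat) : nat := x ^ 2 + x + 1.

Definition inSigma (p : nat) : Prop := prime p /\ (p %% 7 = 2 \/ p %% 7 = 4).

Definition inT (x q : nat) : Prop :=
  prime x /\ 7 < x /\ prime q /\ q <> 3 /\ q %| Phi3 x.

Fixpoint inS (n p x : nat) : Prop :=
  match n with
  | 0 => x = p
  | n'.+1 => inS n' p x \/ exists y, inS n' p y /\ inT y x
  end.

Definition good (p : nat) : Prop :=
  exists n x, inS n p x /\ inSigma x.

Definition special_form (n a b t : nat) (q k : nat -> nat) : Prop :=
  1 <= a /\
  (forall i, i < t -> prime (q i) /\ 5 < q i) /\
  (forall i j, i < j -> j < t -> q i < q j) /\
  n = 5 ^ a * 3 ^ (2 * b) * \prod_(i < t) q i ^ (6 * k i + 2).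

(* Main.v *)
From Stdlib Require Import NArith ZArith Lia.
Require Import Defs.
From mathcomp Require Import all_boot zify ring.
Set Implicit Arguments. Unset Strict Implicit. Unset Printing Implicit Defensive.


Lemma gcd_split d m n : coprime m n -> d %| m * n -> gcdn d m * gcdn d n = d.
Proof.
move=> cmn dmn.
apply/eqP; rewrite eqn_dvd; apply/andP; split.
  rewrite Gauss_dvd ?dvdn_gcdl //.
  apply: (coprime_dvdl (dvdn_gcdr d m)); apply: (coprime_dvdr (dvdn_gcdr d n)) cmn.
have h1 : d %| gcdn d m * n by rewrite muln_gcdl dvdn_gcd dvdn_mulr.
have h2 : d %| gcdn d m * gcdn n d.
  by rewrite muln_gcdr dvdn_gcd h1 dvdn_mull.
by rewrite (gcdnC d n).
Qed.

Lemma gcd_part i j m n : coprime m n -> i %| m -> j %| n -> gcdn (i * j) m = i.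
Proof.
move=> cmn im jn.
rewrite gcdnC mulnC Gauss_gcdr; first exact/gcdn_idPr.
exact: coprime_dvdr jn cmn.
Qed.

Lemma sigma_mul m n : 0 < m -> 0 < n -> coprime m n -> sigma (m * n) = sigma m * sigma n.
Proof.
move=> m0 n0 cmn.
rewrite /sigma.
have -> : \sum_(d <- divisors (m * n)) d = \sum_(d <- [seq i * j | i <- divisors m, j <- divisors n]) d.
  apply: perm_big; apply: uniq_perm.
  - exact: divisors_uniq.
  - apply: allpairs_uniq; [exact: divisors_uniq | exact: divisors_uniq|].
    move=> [i1 j1] [i2 j2] /allpairsP[[x1 y1] [/= X1 Y1 [-> ->]]].
    move=> /allpairsP[[x2 y2] [/= X2 Y2 [-> ->]]] /= E.
    rewrite -!dvdn_divisors // in X1 Y1 X2 Y2.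
    have ex : x1 = x2 by rewrite -(gcd_part cmn X1 Y1) -(gcd_part cmn X2 Y2) E.
    have cnm : coprime n m by rewrite coprime_sym.
    have ey : y1 = y2.
      rewrite -(gcd_part cnm Y1 X1) -(gcd_part cnm Y2 X2).
      by rewrite mulnC E mulnC.
    by rewrite ex ey.
  - move=> d; apply/idP/allpairsP.
      rewrite -dvdn_divisors ?muln_gt0 ?m0 // => dmn.
      exists (gcdn d m, gcdn d n); split => /=.
      + by rewrite -dvdn_divisors // dvdn_gcdr.
      + by rewrite -dvdn_divisors // dvdn_gcdr.
      + by rewrite gcd_split.
    move=> [[i j] [/= I J ->]].
    rewrite -dvdn_divisors ?muln_gt0 ?m0 //.
    rewrite -dvdn_divisors // in I.
    rewrite -dvdn_divisors // in J.
    exact: dvdn_mul.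
rewrite big_allpairs_dep big_distrl /=.
by apply: eq_bigr => i _; rewrite big_distrr.
Qed.

Lemma sigma_pexp p e : prime p -> sigma (p ^ e) = \sum_(i < e.+1) p ^ i.
Proof.
move=> pp.
have p1 := prime_gt1 pp.
rewrite /sigma -(big_mkord xpredT) (perm_big [seq p ^ i | i <- index_iota 0 e.+1]) ?big_map //.
apply: uniq_perm.
- exact: divisors_uniq.
- rewrite map_inj_uniq ?iota_uniq //; exact: expnI.
- move=> d; rewrite -dvdn_divisors ?expn_gt0 ?(ltnW p1) //.
  apply/dvdn_pfactor/mapP => // -[i].
    by move=> ie ->; exists i => //; rewrite mem_index_iota.
  by rewrite mem_index_iota => /andP[_ ie] ->; exists i.
Qed.

Lemma geom_split x k m :
  \sum_(i < k * m) x ^ i = (\sum_(i < k) x ^ i) * \sum_(j < m) x ^ (k * j).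
Proof.
elim: m => [|m IH]; first by rewrite muln0 !big_ord0 muln0.
rewrite mulnS addnC big_split_ord IH big_ord_recr /= mulnDr.
congr (_ + _).
rewrite mulnC big_distrl /=.
by apply: eq_bigr => i _; rewrite expnD mulnC.
Qed.

Lemma odd_geom x m : odd x -> odd (\sum_(i < m) x ^ i) = odd m.
Proof.
move=> ox; elim: m => [|m IH]; first by rewrite big_ord0.
by rewrite big_ord_recr /= oddD IH oddX ox orbT /= addbT.
Qed.

Lemma sum_sub_le (s t : seq nat) : uniq s -> uniq t -> {subset s <= t} ->
  \sum_(e <- s) e <= \sum_(e <- t) e.
Proof.
move=> us ut st.
have -> : \sum_(e <- t) e = \sum_(e <- t | e \in s) e + \sum_(e <- t | e \notin s) e.
  by rewrite (bigID (fun e => e \in s)).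
have P : perm_eq [seq i <- t | i \in s] s.
  apply: uniq_perm => //; first exact: filter_uniq.
  by move=> e; rewrite mem_filter; case es: (e \in s) => //=; rewrite st.
by rewrite -[\sum_(e <- t | e \in s) e]big_filter (perm_big _ P) leq_addr.
Qed.

Lemma abund m n : 0 < n -> m %| n -> n * sigma m <= m * sigma n.
Proof.
move=> n0 /dvdnP[c En].
have c0 : 0 < c by move: n0; rewrite En muln_gt0 => /andP[].
have m0 : 0 < m by move: n0; rewrite En muln_gt0 => /andP[].
rewrite /sigma En.
have -> : c * m * \sum_(i <- divisors m) i = m * \sum_(e <- [seq c * i | i <- divisors m]) e.
  by rewrite big_map !big_distrr /=; apply: eq_bigr => i _; ring.
rewrite leq_mul2l; apply/orP; right.
apply: sum_sub_le; first by rewrite map_inj_uniq ?divisors_uniq // => i j /eqP; rewrite eqn_pmul2l // => /eqP.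
  exact: divisors_uniq.
move=> e /mapP[i]; rewrite -!dvdn_divisors ?muln_gt0 ?c0 // => im ->.
by rewrite dvdn_pmul2l.
Qed.

Definition Pq t (q k : nat -> nat) := \prod_(i < t) q i ^ (6 * k i + 2).

Lemma dvd_prod_j t (F : nat -> nat) j : j < t -> F j %| \prod_(i < t) F i.
Proof. by move=> jt; rewrite (bigD1 (Ordinal jt)) //= dvdn_mulr. Qed.

Lemma prime_odd5 r : prime r -> 5 < r -> odd r.
Proof.
move=> pr r5; apply/negP => /negP; rewrite -dvdn2 dvdn_prime2 //.
by move=> /eqP E; rewrite -E in r5.
Qed.

Lemma coprime15 r : prime r -> 5 < r -> coprime 15 r.
Proof.
move=> pr r5; rewrite coprime_sym prime_coprime //.
apply/negP; rewrite (_ : 15 = 3 * 5) // Euclid_dvdM // => /orP[] /dvdn_leq H;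
  by move: (H isT) r5; case: r {pr H} => // r; lia.
Qed.

Lemma P_props t q k : (forall i, i < t -> prime (q i) /\ 5 < q i) ->
  (forall i j, i < j -> j < t -> q i < q j) ->
  [/\ 0 < Pq t q k, coprime 15 (Pq t q k),
      sigma (Pq t q k) = \prod_(i < t) sigma (q i ^ (6 * k i + 2)) &
      forall r, prime r -> r %| Pq t q k -> exists2 i, i < t & r = q i].
Proof.
elim: t => [|t IH] Hq Hinc.
  rewrite /Pq !big_ord0; split => //; first by rewrite /sigma unlock.
  by move=> r pr; rewrite dvdn1 => /eqP r1; rewrite r1 in pr.
have [||P0 Pc PS Pd] := IH.
- by move=> i it; apply: Hq; apply: ltnW.
- by move=> i j ij jt; apply: Hinc => //; apply: ltnW.
have [pq q5] := Hq t (ltnSn t).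
have cq : coprime (Pq t q k) (q t ^ (6 * k t + 2)).
  apply: coprimeXr; rewrite coprime_sym prime_coprime //.
  apply/negP => /Pd [] // i it E.
  by have := Hinc i t it (ltnSn t); rewrite E ltnn.
rewrite /Pq big_ord_recr /= -/(Pq t q k); split.
- by rewrite muln_gt0 P0 expn_gt0 prime_gt0.
- by rewrite coprimeMr Pc coprimeXr // coprime15.
- by rewrite sigma_mul ?PS ?big_ord_recr // expn_gt0 prime_gt0.
- move=> r pr; rewrite Euclid_dvdM // => /orP[/Pd|].
    by move=> /(_ pr) [i it ->]; exists i => //; apply: ltnW.
  rewrite Euclid_dvdX // (dvdn_prime2 pr pq) => /andP[] /eqP -> _.
  by exists t.
Qed.

Lemma odd_Phi3 x : odd (Phi3 x).
Proof. by rewrite /Phi3 !oddD oddX /=; case: odd. Qed.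

Lemma sum3 x : \sum_(i < 3) x ^ i = Phi3 x.
Proof. rewrite /Phi3 !big_ord_recr big_ord0 /=; ring. Qed.

Lemma Phi3_dvd q k : Phi3 q %| \sum_(i < (6 * k + 2).+1) q ^ i.
Proof.
rewrite (_ : (6 * k + 2).+1 = 3 * (2 * k + 1)); last by lia.
by rewrite geom_split sum3 dvdn_mulr.
Qed.

Lemma main_facts n a b t q k : special_form n a b t q k -> perfect n ->
  [/\ 5 %| n, 9 %| n &
     forall r, prime r -> r %| n -> r != 3 -> r != 5 -> Phi3 r %| n /\ r ^ 2 %| n].
Proof.
move=> [a1 [Hq [Hinc En]]] [n0 Hs].
have [P0 Pc PS Pd] := P_props k Hq Hinc.
rewrite -/(Pq t q k) in En.
set A := 5 ^ a in En; set B := 3 ^ (2 * b) in En; set P := Pq t q k in En P0 Pc PS Pd.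
have cAB : coprime A B by rewrite coprimeXl // coprimeXr.
have cABP : coprime (A * B) P.
  rewrite coprimeMl !coprimeXl //.
    by apply: coprime_dvdl Pc.
  by apply: coprime_dvdl Pc.
have A0 : 0 < A by rewrite expn_gt0.
have B0 : 0 < B by rewrite expn_gt0.
have Sn : sigma n = sigma A * sigma B * sigma P.
  by rewrite En sigma_mul ?muln_gt0 ?A0 // sigma_mul.
have SA : sigma A = \sum_(i < a.+1) 5 ^ i by rewrite sigma_pexp.
have SB : sigma B = \sum_(i < (2 * b).+1) 3 ^ i by rewrite sigma_pexp.
have oa : odd a.
  case ea: (odd a) => //; exfalso.
  have : odd (sigma n).
    rewrite Sn !oddM SA SB !odd_geom //= ea oddM /= PS.
    apply: (big_ind (fun x => odd x)) => //; first by move=> x y ox oy; rewrite oddM ox.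
    move=> i _; have [pq q5] := Hq i (ltn_ord i).
    rewrite sigma_pexp // odd_geom; last exact: prime_odd5.
    by rewrite /= oddD oddM.
  by rewrite Hs oddM.
have d3 : 3 %| n.
  have : 3 %| sigma n.
    rewrite Sn SA; apply: dvdn_mulr; apply: dvdn_mulr.
    have -> : a.+1 = 2 * (a.+1)./2.
      by move: (odd_double_half a.+1); rewrite /= oa /= add0n -muln2 mulnC.
    by rewrite geom_split (_ : \sum_(i < 2) 5 ^ i = 6) ?dvdn_mulr //
      !big_ord_recr big_ord0.
  by rewrite Hs Gauss_dvdr.
have b1 : 0 < b.
  case: (posnP b) => // b0.
  move: d3; rewrite En /B b0 muln0 expn0 muln1 Euclid_dvdM // Euclid_dvdX // => /orP[/andP[] //|].
  move=> /Pd [] // i it E.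
  by have [_] := Hq i it; rewrite -E.
have key : forall r, prime r -> r %| n -> r != 3 -> r != 5 -> exists2 i, i < t & r = q i.
  move=> r pr rn r3 r5; move: rn; rewrite En !Euclid_dvdM // !Euclid_dvdX //.
  rewrite (dvdn_prime2 pr (_ : prime 5)) // (dvdn_prime2 pr (_ : prime 3)) // (negbTE r3) (negbTE r5) /= => /Pd; exact.
split.
- by rewrite En; apply: dvdn_mulr; apply: dvdn_mulr; rewrite -{1}(expn1 5) dvdn_exp2l.
- rewrite En; apply: dvdn_mulr; apply: dvdn_mull.
  by rewrite (_ : 9 = 3 ^ 2) // dvdn_exp2l //; lia.
move=> r pr rn r3 r5; have [i it Er] := key r pr rn r3 r5.
split.
- have : Phi3 r %| sigma n.
    rewrite Sn PS; apply: dvdn_mull; apply: dvdn_trans (dvd_prod_j (fun i => sigma (q i ^ (6 * k i + 2))) it).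
    by rewrite Er sigma_pexp ?Phi3_dvd //; case: (Hq i it).
  by rewrite Hs Gauss_dvdr // coprimen2 odd_Phi3.
- rewrite En; apply: dvdn_mull.
  apply: dvdn_trans (dvd_prod_j (fun i => q i ^ (6 * k i + 2)) it).
  by rewrite Er dvdn_exp2l //; lia.
Qed.

Lemma mN (x y : nat) : Nat.modulo x y = x %% y.
Proof.
case: y => [|y]; first by rewrite Nat.mod_0_r modn0.
have E : x = Nat.div x y.+1 * y.+1 + Nat.modulo x y.+1 by have := Nat.div_mod_eq x y.+1; nia.
rewrite {2}E modnMDl modn_small //.
apply/ltP; apply: Nat.mod_upper_bound; lia.
Qed.

Lemma dN (x y : nat) : Nat.div x y = x %/ y.
Proof.
case: y => [|y]; first by rewrite Nat.div_0_r divn0.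
have E : x = Nat.div x y.+1 * y.+1 + Nat.modulo x y.+1 by have := Nat.div_mod_eq x y.+1; nia.
rewrite {2}E divnMDl // divn_small ?addn0 //.
apply/ltP; apply: Nat.mod_upper_bound; lia.
Qed.

Lemma tmod (x y : N) : N.to_nat (x mod y) = N.to_nat x %% N.to_nat y.
Proof. by rewrite N2Nat.inj_mod mN. Qed.
Lemma tdiv (x y : N) : N.to_nat (x / y) = N.to_nat x %/ N.to_nat y.
Proof. by rewrite N2Nat.inj_div dN. Qed.
Lemma tmul (x y : N) : N.to_nat (x * y) = N.to_nat x * N.to_nat y.
Proof. lia. Qed.
Lemma tsub (x y : N) : N.to_nat (x - y) = N.to_nat x - N.to_nat y.
Proof. lia. Qed.
Lemma tadd (x y : N) : N.to_nat (x + y) = N.to_nat x + N.to_nat y.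
Proof. lia. Qed.

Definition pstep (x : N) (st : N * bool) : N * bool :=
  (N.succ (fst st), snd st && negb (N.eqb (N.modulo x (fst st)) 0%num)).
Definition isprimeN (x : N) : bool :=
  let st := Pos.iter (pstep x) (2%num, true) (N.succ_pos (N.sqrt x)) in
  snd st && N.ltb x (fst st * fst st) && N.leb 2 x.

Lemma isprimeN_ok x : isprimeN x = true -> prime (N.to_nat x).
Proof.
rewrite /isprimeN.
set st := Pos.iter _ _ _.
pose Inv (st : N * bool) := (2 <= fst st)%num /\ (snd st = true -> forall e, (2 <= e)%num -> (e < fst st)%num -> N.modulo x e <> 0%num).
have : Inv st.
  apply: (Pos.iter_invariant _ _ _ Inv); last by split => //=; lia.
  move=> [d ok]; rewrite /Inv /= => -[d2 H]; split; first lia.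
  move=> /andP[/H{}H /negP He] e e2 ed.
  case: (N.lt_ge_cases e d) => ed'; first exact: H.
  have -> : e = d by lia.
  by move=> E; apply: He; rewrite E.
move: st => [d ok]; rewrite /Inv /= => -[_ H] /andP[/andP[okT /N.ltb_spec0 xd] /N.leb_spec0 x2].
move: (H okT) => {}H.
case: (boolP (prime (N.to_nat x))) => // /primePns [|[p [pp p2 pX]]]; first lia.
have pd : (N.of_nat p < d)%num.
  have : (N.to_nat x < N.to_nat d * N.to_nat d)%coq_nat by lia.
  rewrite -mulnn in p2; move/leP: p2; nia.
exfalso; apply: (H (N.of_nat p)) => //; first by have := prime_gt1 pp; lia.
apply: N2Nat.inj; rewrite tmod Nat2N.id.
by move: pX; rewrite /dvdn => /eqP ->.
Qed.

Fixpoint powmodP (a : N) (p : positive) (m : N) : N :=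
  match p with
  | xH => N.modulo a m
  | xO p' => let r := powmodP a p' m in N.modulo (r * r) m
  | xI p' => let r := powmodP a p' m in N.modulo (r * r * a) m
  end.
Definition powmod (a e m : N) : N :=
  match e with N0 => N.modulo 1 m | Npos p => powmodP a p m end.

Lemma powmodP_ok a p m :
  N.to_nat (powmodP a p m) = (N.to_nat a ^ Pos.to_nat p) %% N.to_nat m.
Proof.
elim: p => [p IH|p IH|] /=.
- rewrite tmod !tmul IH Pos2Nat.inj_xI.
  rewrite (_ : (2 * Pos.to_nat p)%coq_nat.+1 = (Pos.to_nat p + Pos.to_nat p).+1); last by lia.
  by rewrite expnS expnD -modnMml modnMm modnMml mulnC.
- rewrite tmod !tmul IH Pos2Nat.inj_xO.
  rewrite (_ : (2 * Pos.to_nat p)%coq_nat = Pos.to_nat p + Pos.to_nat p); last by lia.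
  by rewrite expnD modnMml modnMmr.
- by rewrite tmod expn1.
Qed.

Lemma powmod_ok a e m :
  N.to_nat (powmod a e m) = (N.to_nat a ^ N.to_nat e) %% N.to_nat m.
Proof. by case: e => [|p] /=; [rewrite tmod | exact: powmodP_ok]. Qed.

Lemma powmod1 A p x c : A ^ x = 1 %[mod p] -> A ^ (x * c) = 1 %[mod p].
Proof. by move=> H; rewrite expnM -modnXm H modnXm exp1n. Qed.

Lemma fermat1 A p : prime p -> ~~ (p %| A) -> A ^ p.-1 = 1 %[mod p].
Proof.
move=> pp nA.
have A0 : 0 < A by case: A nA => //; rewrite dvdn0.
have X0 : 0 < A ^ p.-1 by rewrite expn_gt0 A0.
have F : A * A ^ p.-1 = A %[mod p] by rewrite -expnS prednK ?prime_gt0 // fermat_little.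
have : p %| A * A ^ p.-1 - A.
  rewrite -eqn_mod_dvd; first by apply/eqP; rewrite F.
  by rewrite leq_pmulr.
rewrite -[X in _ - X](muln1 A) -mulnBr Gauss_dvdr; last by rewrite prime_coprime.
by rewrite -eqn_mod_dvd // => /eqP.
Qed.

Lemma pow_gcd1 A p x y : 0 < x -> A ^ x = 1 %[mod p] -> A ^ y = 1 %[mod p] ->
  A ^ gcdn x y = 1 %[mod p].
Proof.
move=> x0 Hx Hy.
case: (egcdnP y x0) => km kn E _.
have H1 := powmod1 km Hx.
rewrite (mulnC x km) E expnD -modnMml (mulnC kn y) (powmod1 kn Hy) modnMml mul1n in H1.
by rewrite H1.
Qed.

Lemma prod_dvd (qs : seq nat) D : uniq qs -> (forall q, q \in qs -> prime q /\ q %| D) ->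
  \prod_(q <- qs) q %| D.
Proof.
elim: qs => [|q qs IH] /=; first by rewrite big_nil dvd1n.
move=> /andP[nq uq] H.
have [pq qD] := H q (mem_head _ _).
rewrite big_cons Gauss_dvd ?qD ?IH //.
  by move=> r rin; apply: H; rewrite inE rin orbT.
rewrite big_seq; apply: (big_ind (fun x => coprime q x)) => //; first exact: coprimen1.
  by move=> x y cx cy; rewrite coprimeMr cx.
move=> r rin; have rin2 : r \in q :: qs by rewrite inE rin orbT.
have [pr _] := H r rin2.
rewrite prime_coprime // dvdn_prime2 //; apply/negP => /eqP qr.
by rewrite qr rin in nq.
Qed.

Lemma pock_nat M A (qs : seq nat) :
  1 < M -> A ^ M.-1 = 1 %[mod M] -> uniq qs ->
  (forall q, q \in qs -> [/\ prime q, q %| M.-1 &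
      exists u v, u * (A ^ (M.-1 %/ q) %% M).-1 = v * M + 1]) ->
  M < (\prod_(q <- qs) q) ^ 2 -> prime M.
Proof.
move=> M1 HA uq Hq HM.
case: (boolP (prime M)) => // /primePns [|[p [pp p2 pM]]]; first by lia.
have p1 := prime_gt1 pp.
have HAp : A ^ M.-1 = 1 %[mod p] by rewrite -(modn_dvdm (A ^ M.-1) pM) HA modn_dvdm.
have nA : ~~ (p %| A).
  apply/negP => pA.
  have : p %| A ^ M.-1 by apply: dvdn_exp => //; lia.
  by rewrite /dvdn HAp modn_small.
have Hf := fermat1 pp nA.
have M0 : 0 < M.-1 by rewrite -subn1 subn_gt0.
have Hg := pow_gcd1 M0 HAp Hf.
have Hqd : forall q, q \in qs -> prime q /\ q %| p.-1.
  move=> q qin; have [pq qM [u [v Euv]]] := Hq q qin; split => //.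
  apply: dvdn_trans (dvdn_gcdr M.-1 p.-1).
  case: (boolP (q %| gcdn M.-1 p.-1)) => // nq; exfalso.
  move: Hg; set g := gcdn M.-1 p.-1 => Hg'.
  have gd : g %| M.-1 %/ q.
    have : g %| (M.-1 %/ q) * q by rewrite divnK // dvdn_gcdl.
    by rewrite Gauss_dvdl // coprime_sym prime_coprime.
  have H1 : A ^ (M.-1 %/ q) = 1 %[mod p] by case/dvdnP: gd => c ->; rewrite mulnC powmod1.
  move: Euv; set R := A ^ (M.-1 %/ q) %% M => Euv.
  have HR : R = 1 %[mod p] by rewrite /R modn_dvdm.
  have R0 : 0 < R by case: R HR {Euv} => //; rewrite mod0n modn_small.
  have pR : p %| R.-1.
    by rewrite -subn1 -eqn_mod_dvd // HR.
  have : p %| v * M + 1 by rewrite -Euv dvdn_mull.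
  rewrite dvdn_addr ?dvdn_mull // => /dvdn_leq H.
  by have := H isT; rewrite leqNgt p1.
have := prod_dvd uq Hqd.
move=> /dvdn_leq H; have Fp := H (_ : 0 < p.-1).
have p0 : 0 < p.-1 by rewrite -subn1 subn_gt0.
have FP : \prod_(q <- qs) q < p by move: (Fp p0); case: (p) p1.
have FF := ltn_mul FP FP.
move: HM p2; rewrite -!mulnn => HM p2.
by have := leq_ltn_trans p2 HM; rewrite ltnNge (ltnW FF).
Qed.

Definition prodN (ws : seq (N * N * N)) : N := foldr (fun w acc => (w.1.1 * acc)%num) 1%num ws.

Definition pock_ok (x a : N) (ws : seq (N * N * N)) : bool :=
  N.ltb 1 x && N.eqb (powmod a (x - 1) x) 1 &&
  all (fun w => isprimeN w.1.1 && N.eqb (N.modulo (x - 1) w.1.1) 0 &&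
        N.eqb (w.1.2 * (powmod a ((x - 1) / w.1.1) x - 1)) (w.2 * x + 1)) ws &&
  uniq [seq N.to_nat w.1.1 | w <- ws] &&
  N.ltb x (prodN ws * prodN ws).

Lemma prodN_ok ws : N.to_nat (prodN ws) = \prod_(q <- [seq N.to_nat w.1.1 | w <- ws]) q.
Proof.
elim: ws => [|w ws IH] /=; first by rewrite big_nil.
by rewrite big_cons tmul IH.
Qed.

Lemma pock_ok_prime x a ws : pock_ok x a ws = true -> prime (N.to_nat x).
Proof.
rewrite /pock_ok => /andP[/andP[/andP[/andP[/N.ltb_spec0 x1 /N.eqb_spec HA] /allP Hw] uq] /N.ltb_spec0 HP].
have M1 : 1 < N.to_nat x by lia.
apply: (pock_nat (A := N.to_nat a) M1 _ uq).
- have := powmod_ok a (x - 1) x; rewrite HA tsub subn1 /= => <-.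
  by rewrite modn_small.
- move=> q /mapP [w win ->]; have := Hw w win.
  move=> /andP[/andP[/isprimeN_ok pq /N.eqb_spec Hm] /N.eqb_spec Hb]; split => //.
  + by rewrite /dvdn -subn1 -(tsub x 1) -tmod Hm.
  + exists (N.to_nat w.1.2), (N.to_nat w.2).
    have := f_equal N.to_nat Hb; rewrite tmul tsub tadd tmul powmod_ok tdiv tsub.
    by rewrite /= !subn1.
- rewrite -prodN_ok -mulnn -tmul; apply/ltP; lia.
Qed.

Fixpoint chain_ok (pr : N -> bool) (p : N) (l : seq N) : bool :=
  match l with
  | [::] => N.eqb (N.modulo p 7) 2 || N.eqb (N.modulo p 7) 4
  | x :: l' => pr x && negb (N.eqb x 3) && N.ltb 7 p &&
               N.eqb (N.modulo (p * p + p + 1) x) 0 && chain_ok pr x l'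
  end.

Lemma inS_pre p x m y : inT p x -> inS m x y -> inS m.+1 p y.
Proof.
move=> Tpx; elim: m y => [|m IH] y /=.
  by move=> ->; right; exists p; split.
case=> [/IH H|[z [/IH H Tzy]]]; first by left.
by right; exists z.
Qed.

Lemma chain_good (pr : N -> bool) p l :
  (forall x, pr x = true -> prime (N.to_nat x)) -> pr p = true ->
  chain_ok pr p l = true -> good (N.to_nat p).
Proof.
move=> Hpr; elim: l p => [|x l IH] p pp /=.
  move=> H; exists 0, (N.to_nat p); split => //; split; first exact: Hpr.
  by rewrite -(tmod p 7); move: H => /orP[/N.eqb_spec -> | /N.eqb_spec ->]; [left|right].
move=> /andP[/andP[/andP[/andP[px /negP x3] /N.ltb_spec0 p7] /N.eqb_spec Hd] Hc].
have [m [y [Sy Sy']]] := IH x px Hc.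
exists m.+1, y; split => //.
apply: (inS_pre _ Sy); split; first exact: Hpr.
split; first by apply/ltP; lia.
split; first exact: Hpr.
split; first by move=> E; apply: x3; apply/N.eqb_spec; lia.
have E : N.to_nat (N.modulo (p * p + p + 1) x) = (N.to_nat p * N.to_nat p + N.to_nat p + 1) %% N.to_nat x by rewrite tmod !tadd tmul.
by rewrite /dvdn /Phi3 -mulnn -E Hd.
Qed.

Definition Xbig : N := 3737657091169%num.
Definition Xws := [:: (19%num, 3331805171284%num, 1332714329543%num);
  (151%num, 1340480728240%num, 1096241044511%num);
  (4519%num, 2155825918455%num, 281848005086%num)].
Lemma Xcert : pock_ok Xbig 2 Xws = true.
Proof. vm_compute. reflexivity. Qed.
Lemma Xprime : prime (N.to_nat Xbig).
Proof. exact: (pock_ok_prime Xcert). Qed.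

Definition prN (x : N) : bool := if N.eqb x Xbig then true else isprimeN x.
Lemma prN_ok x : prN x = true -> prime (N.to_nat x).
Proof. rewrite /prN; case: N.eqb_spec => [-> _|_ /isprimeN_ok //]; exact: Xprime. Qed.

Lemma c11 : chain_ok prN 11%num [::] = true.
Proof. vm_compute; reflexivity. Qed.

Lemma g11 : good 11.
Proof. exact: (chain_good (p := 11%num) prN_ok (erefl true) c11). Qed.

Lemma c13 : chain_ok prN 13%num [:: 61; 97; 3169; 3348577; 3737657091169; 181; 79]%num = true.
Proof. vm_compute; reflexivity. Qed.

Lemma g13 : good 13.
Proof. exact: (chain_good (p := 13%num) prN_ok (erefl true) c13). Qed.

Lemma c17 : chain_ok prN 17%num [:: 307; 43; 631; 433; 37]%num = true.
Proof. vm_compute; reflexivity. Qed.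

Lemma g17 : good 17.
Proof. exact: (chain_good (p := 17%num) prN_ok (erefl true) c17). Qed.

Lemma c19 : chain_ok prN 19%num [:: 127; 5419; 313; 181; 79]%num = true.
Proof. vm_compute; reflexivity. Qed.

Lemma g19 : good 19.
Proof. exact: (chain_good (p := 19%num) prN_ok (erefl true) c19). Qed.

Lemma c23 : chain_ok prN 23%num [::] = true.
Proof. vm_compute; reflexivity. Qed.

Lemma g23 : good 23.
Proof. exact: (chain_good (p := 23%num) prN_ok (erefl true) c23). Qed.

Lemma c29 : chain_ok prN 29%num [:: 67]%num = true.
Proof. vm_compute; reflexivity. Qed.

Lemma g29 : good 29.
Proof. exact: (chain_good (p := 29%num) prN_ok (erefl true) c29). Qed.

Lemma c31 : chain_ok prN 31%num [:: 331]%num = true.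
Proof. vm_compute; reflexivity. Qed.

Lemma g31 : good 31.
Proof. exact: (chain_good (p := 31%num) prN_ok (erefl true) c31). Qed.

Lemma c37 : chain_ok prN 37%num [::] = true.
Proof. vm_compute; reflexivity. Qed.

Lemma g37 : good 37.
Proof. exact: (chain_good (p := 37%num) prN_ok (erefl true) c37). Qed.

Lemma c41 : chain_ok prN 41%num [:: 1723; 990151; 147739]%num = true.
Proof. vm_compute; reflexivity. Qed.

Lemma g41 : good 41.
Proof. exact: (chain_good (p := 41%num) prN_ok (erefl true) c41). Qed.

Lemma c43 : chain_ok prN 43%num [:: 631; 433; 37]%num = true.
Proof. vm_compute; reflexivity. Qed.

Lemma g43 : good 43.
Proof. exact: (chain_good (p := 43%num) prN_ok (erefl true) c43). Qed.

Lemma c47 : chain_ok prN 47%num [:: 37]%num = true.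
Proof. vm_compute; reflexivity. Qed.

Lemma g47 : good 47.
Proof. exact: (chain_good (p := 47%num) prN_ok (erefl true) c47). Qed.

Lemma c53 : chain_ok prN 53%num [::] = true.
Proof. vm_compute; reflexivity. Qed.

Lemma g53 : good 53.
Proof. exact: (chain_good (p := 53%num) prN_ok (erefl true) c53). Qed.

Lemma c59 : chain_ok prN 59%num [:: 3541; 37]%num = true.
Proof. vm_compute; reflexivity. Qed.

Lemma g59 : good 59.
Proof. exact: (chain_good (p := 59%num) prN_ok (erefl true) c59). Qed.

Lemma c61 : chain_ok prN 61%num [:: 97; 3169; 3348577; 3737657091169; 181; 79]%num = true.
Proof. vm_compute; reflexivity. Qed.

Lemma g61 : good 61.
Proof. exact: (chain_good (p := 61%num) prN_ok (erefl true) c61). Qed.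

Lemma c67 : chain_ok prN 67%num [::] = true.
Proof. vm_compute; reflexivity. Qed.

Lemma g67 : good 67.
Proof. exact: (chain_good (p := 67%num) prN_ok (erefl true) c67). Qed.

Lemma c71 : chain_ok prN 71%num [:: 5113; 8715961]%num = true.
Proof. vm_compute; reflexivity. Qed.

Lemma g71 : good 71.
Proof. exact: (chain_good (p := 71%num) prN_ok (erefl true) c71). Qed.

Lemma c73 : chain_ok prN 73%num [:: 1801]%num = true.
Proof. vm_compute; reflexivity. Qed.

Lemma g73 : good 73.
Proof. exact: (chain_good (p := 73%num) prN_ok (erefl true) c73). Qed.

Lemma c79 : chain_ok prN 79%num [::] = true.
Proof. vm_compute; reflexivity. Qed.

Lemma g79 : good 79.
Proof. exact: (chain_good (p := 79%num) prN_ok (erefl true) c79). Qed.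

Lemma c83 : chain_ok prN 83%num [:: 19; 127; 5419; 313; 181; 79]%num = true.
Proof. vm_compute; reflexivity. Qed.

Lemma g83 : good 83.
Proof. exact: (chain_good (p := 83%num) prN_ok (erefl true) c83). Qed.

Lemma c89 : chain_ok prN 89%num [:: 8011; 1645747; 2503]%num = true.
Proof. vm_compute; reflexivity. Qed.

Lemma g89 : good 89.
Proof. exact: (chain_good (p := 89%num) prN_ok (erefl true) c89). Qed.

Lemma c97 : chain_ok prN 97%num [:: 3169; 3348577; 3737657091169; 181; 79]%num = true.
Proof. vm_compute; reflexivity. Qed.

Lemma g97 : good 97.
Proof. exact: (chain_good (p := 97%num) prN_ok (erefl true) c97). Qed.

Lemma c101 : chain_ok prN 101%num [:: 10303; 5827; 433; 37]%num = true.
Proof. vm_compute; reflexivity. Qed.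

Lemma g101 : good 101.
Proof. exact: (chain_good (p := 101%num) prN_ok (erefl true) c101). Qed.

Lemma c103 : chain_ok prN 103%num [:: 3571; 181; 79]%num = true.
Proof. vm_compute; reflexivity. Qed.

Lemma g103 : good 103.
Proof. exact: (chain_good (p := 103%num) prN_ok (erefl true) c103). Qed.

Lemma c107 : chain_ok prN 107%num [::] = true.
Proof. vm_compute; reflexivity. Qed.

Lemma g107 : good 107.
Proof. exact: (chain_good (p := 107%num) prN_ok (erefl true) c107). Qed.

Lemma c109 : chain_ok prN 109%num [::] = true.
Proof. vm_compute; reflexivity. Qed.

Lemma g109 : good 109.
Proof. exact: (chain_good (p := 109%num) prN_ok (erefl true) c109). Qed.

Lemma c113 : chain_ok prN 113%num [:: 991]%num = true.
Proof. vm_compute; reflexivity. Qed.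

Lemma g113 : good 113.
Proof. exact: (chain_good (p := 113%num) prN_ok (erefl true) c113). Qed.

Lemma c127 : chain_ok prN 127%num [:: 5419; 313; 181; 79]%num = true.
Proof. vm_compute; reflexivity. Qed.

Lemma g127 : good 127.
Proof. exact: (chain_good (p := 127%num) prN_ok (erefl true) c127). Qed.

Lemma c131 : chain_ok prN 131%num [:: 17293; 7668337; 24460537; 331]%num = true.
Proof. vm_compute; reflexivity. Qed.

Lemma g131 : good 131.
Proof. exact: (chain_good (p := 131%num) prN_ok (erefl true) c131). Qed.

Lemma c137 : chain_ok prN 137%num [::] = true.
Proof. vm_compute; reflexivity. Qed.

Lemma g137 : good 137.
Proof. exact: (chain_good (p := 137%num) prN_ok (erefl true) c137). Qed.

Lemma c139 : chain_ok prN 139%num [:: 499]%num = true.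
Proof. vm_compute; reflexivity. Qed.

Lemma g139 : good 139.
Proof. exact: (chain_good (p := 139%num) prN_ok (erefl true) c139). Qed.

Lemma c149 : chain_ok prN 149%num [::] = true.
Proof. vm_compute; reflexivity. Qed.

Lemma g149 : good 149.
Proof. exact: (chain_good (p := 149%num) prN_ok (erefl true) c149). Qed.

Lemma c151 : chain_ok prN 151%num [::] = true.
Proof. vm_compute; reflexivity. Qed.

Lemma g151 : good 151.
Proof. exact: (chain_good (p := 151%num) prN_ok (erefl true) c151). Qed.

Lemma c157 : chain_ok prN 157%num [:: 8269]%num = true.
Proof. vm_compute; reflexivity. Qed.

Lemma g157 : good 157.
Proof. exact: (chain_good (p := 157%num) prN_ok (erefl true) c157). Qed.

Definition table_list := [:: 11; 13; 17; 19; 23; 29; 31; 37; 41; 43; 47; 53; 59; 61; 67; 71; 73; 79; 83; 89; 97; 101; 103; 107; 109; 113; 127; 131; 137; 139; 149; 151; 157].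

Lemma table_good p : p \in table_list -> good p.
Proof.
rewrite !inE.
case/orP; [by move/eqP->; exact: g11|].
case/orP; [by move/eqP->; exact: g13|].
case/orP; [by move/eqP->; exact: g17|].
case/orP; [by move/eqP->; exact: g19|].
case/orP; [by move/eqP->; exact: g23|].
case/orP; [by move/eqP->; exact: g29|].
case/orP; [by move/eqP->; exact: g31|].
case/orP; [by move/eqP->; exact: g37|].
case/orP; [by move/eqP->; exact: g41|].
case/orP; [by move/eqP->; exact: g43|].
case/orP; [by move/eqP->; exact: g47|].
case/orP; [by move/eqP->; exact: g53|].
case/orP; [by move/eqP->; exact: g59|].
case/orP; [by move/eqP->; exact: g61|].
case/orP; [by move/eqP->; exact: g67|].
case/orP; [by move/eqP->; exact: g71|].
case/orP; [by move/eqP->; exact: g73|].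
case/orP; [by move/eqP->; exact: g79|].
case/orP; [by move/eqP->; exact: g83|].
case/orP; [by move/eqP->; exact: g89|].
case/orP; [by move/eqP->; exact: g97|].
case/orP; [by move/eqP->; exact: g101|].
case/orP; [by move/eqP->; exact: g103|].
case/orP; [by move/eqP->; exact: g107|].
case/orP; [by move/eqP->; exact: g109|].
case/orP; [by move/eqP->; exact: g113|].
case/orP; [by move/eqP->; exact: g127|].
case/orP; [by move/eqP->; exact: g131|].
case/orP; [by move/eqP->; exact: g137|].
case/orP; [by move/eqP->; exact: g139|].
case/orP; [by move/eqP->; exact: g149|].
case/orP; [by move/eqP->; exact: g151|].
by move/eqP->; exact: g157.
Qed.



Lemma Phi3_mod y m : Phi3 y = Phi3 (y %% m) %[mod m].
Proof.
rewrite {1}(divn_eq y m); set c := y %/ m; set r := y %% m.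
rewrite (_ : Phi3 (c * m + r) = (c * (2 * r + c * m) + c) * m + Phi3 r); last by rewrite /Phi3; ring.
by rewrite modnMDl.
Qed.

Lemma no5 y : ~~ (5 %| Phi3 y).
Proof.
rewrite /dvdn Phi3_mod.
have : y %% 5 < 5 by rewrite ltn_mod.
by case: (y %% 5) => [|[|[|[|[|]]]]].
Qed.

Lemma sigma7 x : x %% 7 = 2 \/ x %% 7 = 4 -> 7 %| Phi3 x.
Proof. by rewrite /dvdn Phi3_mod => -[] ->. Qed.

Lemma abund2 m n : perfect n -> m %| n -> sigma m <= 2 * m.
Proof.
move=> [n0 Hs] d; have := abund n0 d.
by rewrite Hs mulnA [_ * n]mulnC leq_pmul2l // [m * 2]mulnC.
Qed.

Lemma no7 n a b t q k : special_form n a b t q k -> perfect n -> ~ (7 %| n).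
Proof.
move=> SF Pn d7.
have [d5 d9 K] := main_facts SF Pn.
have [_ d49] := K 7 isT d7 isT isT.
have d : 5 ^ 1 * (3 ^ 2 * 7 ^ 2) %| n.
  rewrite Gauss_dvd // expn1 d5 Gauss_dvd // d9.
  exact: d49.
have := abund2 Pn d.
rewrite (@sigma_mul (5 ^ 1) (3 ^ 2 * 7 ^ 2)) // (@sigma_mul (3 ^ 2) (7 ^ 2)) // !sigma_pexp //.
by rewrite !big_ord_recr !big_ord0.
Qed.

Lemma inS_props n p m x :
  (forall r, prime r -> r %| n -> r != 3 -> r != 5 -> Phi3 r %| n /\ r ^ 2 %| n) ->
  prime p -> p %| n -> p != 3 -> p != 5 -> inS m p x ->
  [/\ prime x, x %| n, x != 3 & x != 5].
Proof.
move=> K pp pn p3 p5; elim: m x => [|m IH] x /=; first by move=> ->.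
case=> [/IH //|[y [/IH [py yn y3 y5] [_ [_ [px [x3 xd]]]]]]].
have [yn' _] := K y py yn y3 y5.
split => //; first exact: dvdn_trans xd yn'.
  by apply/eqP.
by apply/negP => /eqP x5; move: xd; rewrite x5; apply/negP; exact: no5.
Qed.

Lemma qi_dvd n a b t q k i : special_form n a b t q k -> i < t -> q i %| n.
Proof.
move=> [_ [_ [_ ->]]] it; apply: dvdn_mull.
apply: dvdn_trans (dvd_prod_j (fun i => q i ^ (6 * k i + 2)) it).
by rewrite -{1}(expn1 (q i)) dvdn_exp2l //; lia.
Qed.

Lemma core_a n a b t q k : special_form n a b t q k -> perfect n ->
  (exists i, i < t /\ good (q i)) -> False.
Proof.
move=> SF Pn [i [it [m [x [Sx [px Hx]]]]]].
have [d5 d9 K] := main_facts SF Pn.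
have [pq q5] := (proj1 (proj2 SF)) i it.
have q3 : q i != 3 by apply/eqP => E; rewrite E in q5.
have q5' : q i != 5 by apply/eqP => E; rewrite E in q5.
have [_ xn x3 x5] := inS_props K pq (qi_dvd SF it) q3 q5' Sx.
have [Pn' _] := K x px xn x3 x5.
apply: (no7 SF Pn); exact: dvdn_trans (sigma7 Hx) Pn'.
Qed.

Lemma case_t0 n a b q k : special_form n a b 0 q k -> perfect n -> False.
Proof.
move=> [a1 [_ [_ En]]] [n0 Hs].
rewrite big_ord0 muln1 in En.
have Sn : sigma n = sigma (5 ^ a) * sigma (3 ^ (2 * b)).
  by rewrite En sigma_mul ?expn_gt0 // coprimeXl // coprimeXr.
rewrite !sigma_pexp // in Sn.
have E5 := predn_exp 5 a.+1.
have E3 := predn_exp 3 (2 * b).+1.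
set S5 := \sum_(i < a.+1) 5 ^ i in Sn E5.
set S3 := \sum_(i < (2 * b).+1) 3 ^ i in Sn E3.
have h5 : 4 * S5 < 5 * 5 ^ a.
  by rewrite -[4]/(5.-1) -E5 expnS prednK // muln_gt0 expn_gt0.
have h3 : 2 * S3 < 3 * 3 ^ (2 * b).
  by rewrite -[2]/(3.-1) -E3 expnS prednK // muln_gt0 expn_gt0.
have := ltn_mul h5 h3.
clearbody S5 S3.
have E : S5 * S3 = 2 * (5 ^ a * 3 ^ (2 * b)) by rewrite -Sn Hs En.
have -> : 4 * S5 * (2 * S3) = 16 * (5 ^ a * 3 ^ (2 * b)).
  have -> : 4 * S5 * (2 * S3) = 8 * (S5 * S3) by ring.
  by rewrite E; ring.
have -> : 5 * 5 ^ a * (3 * 3 ^ (2 * b)) = 15 * (5 ^ a * 3 ^ (2 * b)) by ring.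
have : 0 < 5 ^ a * 3 ^ (2 * b) by rewrite muln_gt0 !expn_gt0.
move: (5 ^ a * 3 ^ (2 * b)) => Z.
clear; lia.
Qed.


Lemma tbl p : prime p -> 5 < p -> p <= 157 -> p = 7 \/ p \in table_list.
Proof.
move=> pp p5 p157.
have H : all (fun p => prime p ==> (p == 7) || (p \in table_list)) (iota 6 152).
  by vm_compute.
have : p \in iota 6 152 by rewrite mem_iota; apply/andP; split; [exact: p5 | lia].
move/(allP H); rewrite pp /= => /orP[/eqP ->|]; [left|right] => //.
Qed.

Theorem theorem1p4 :
  (* (a) *)
  (forall (n a b t : nat) (q k : nat -> nat),
      special_form n a b t q k ->
      (exists i, i < t /\ good (q i)) ->
      ~ (odd n /\ perfect n)) /\
  (* (b) *)
  (forall (n a b t : nat) (q k : nat -> nat),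
      special_form n a b t q k ->
      (exists i, i < t /\ q i <= 157) ->
      ~ perfect n) /\
  (* (c) *)
  ((forall p, prime p -> 7 < p -> good p) ->
   forall (n a b t : nat) (q k : nat -> nat),
      special_form n a b t q k ->
      ~ (odd n /\ perfect n)).
Proof.
split; [|split].
- move=> n a b t q k SF Hg [_ Pn]; exact: core_a SF Pn Hg.
- move=> n a b t q k SF [i [it qle]] Pn.
  have [pq q5] := (proj1 (proj2 SF)) i it.
  case: (tbl pq q5 qle) => [q7|qin].
    by apply: (no7 SF Pn); rewrite -q7; exact: qi_dvd SF it.
  by apply: (core_a SF Pn); exists i; split => //; exact: table_good.
- move=> Hall n a b t q k SF [_ Pn].
  case: t SF => [|t] SF; first exact: case_t0 SF Pn.
  have [pq q5] := (proj1 (proj2 SF)) 0 isT.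
  case: (ltngtP 7 (q 0)) => [q7|q7|q7].
  + by apply: (core_a SF Pn); exists 0; split => //; exact: Hall.
  + have E : q 0 = 6 by lia.
    by rewrite E in pq.
  + by apply: (no7 SF Pn); rewrite q7; exact: qi_dvd SF (isT : 0 < t.+1).
Qed.
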